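(* Let $v\in C(S^1,(0,\infty))$ be separable in $S^1$ and suppose $v((\cos\alpha,\sin\alpha))=v((\cos(\alpha+\pi),\sin(\alpha+\pi)))$ for every $\alpha\in[0,2\pi)$. Then $v$ is constant on $S^1$.
   Context: $S^1\subset\mathbb{R}^2$ is the unit circle. For $\alpha\in\mathbb{R}$, $S^1_\alpha=\{(\cos(\alpha+\theta),\sin(\alpha+\theta)):\theta\in(0,\pi)\}$, and for $x\in S^1$, $l_\alpha(x)$ denotes the reflection of $x$ across the line through the origin with direction $(\cos\alpha,\sin\alpha)$. A function $v\in C(S^1,\mathbb{R})$ is called separable in $S^1$ if for every $\alpha\in[0,2\pi)$, either $v(l_\alpha(x))\ge v(x)$ for all $x\in S^1_\alpha$, or $v(l_\alpha(x))\le v(x)$ for all $x\in S^1_\alpha$. *)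

(* Defs.v *)
From Stdlib Require Import Reals.
Open Scope R_scope.

Definition pt := (R * R)%type.

Definition on_S1 (p : pt) : Prop := fst p ^ 2 + snd p ^ 2 = 1.

Definition dist2 (p q : pt) : R :=
  sqrt ((fst p - fst q) ^ 2 + (snd p - snd q) ^ 2).

Definition cont_on_S1 (v : pt -> R) : Prop :=
  forall p, on_S1 p -> forall eps, 0 < eps ->
    exists delta, 0 < delta /\
      forall q, on_S1 q -> dist2 q p < delta -> Rabs (v q - v p) < eps.

Definition S1_half (alpha : R) (p : pt) : Prop :=
  exists theta, 0 < theta < PI /\
    p = (cos (alpha + theta), sin (alpha + theta)).

(* Reflection across the line through 0 with direction (cos a, sin a). *)
Definition refl (alpha : R) (p : pt) : pt :=
  let d := fst p * cos alpha + snd p * sin alpha in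
  (2 * d * cos alpha - fst p, 2 * d * sin alpha - snd p).

Definition separable_S1 (v : pt -> R) : Prop :=
  forall alpha, 0 <= alpha < 2 * PI ->
    (forall x, S1_half alpha x -> v (refl alpha x) >= v x) \/
    (forall x, S1_half alpha x -> v (refl alpha x) <= v x).

(* Main.v *)
Require Import Defs.
From Stdlib Require Import Reals Lra Psatz.
Open Scope R_scope.

Lemma param (x y : R) : x ^ 2 + y ^ 2 = 1 ->
  exists t, 0 <= t < 2 * PI /\ x = cos t /\ y = sin t.
Proof.
  intro H.
  assert (Hx : -1 <= x <= 1) by nra.
  assert (Hs : sqrt (1 - x²) = Rabs y).
  { replace (1 - x²) with (Rsqr y) by (unfold Rsqr; nra). apply sqrt_Rsqr_abs. }
  pose proof (acos_bound x) as Hb. pose proof PI_RGT_0.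
  destruct (Rle_or_lt 0 y) as [Hy|Hy].
  - exists (acos x). split; [lra|]. split.
    + rewrite cos_acos; auto.
    + rewrite sin_acos, Hs, Rabs_right; lra.
  - assert (Ha : 0 < acos x).
    { destruct (proj1 Hb) as [h|h]; auto.
      exfalso. assert (x = 1) by (rewrite <- (cos_acos x Hx), <- h; apply cos_0).
      subst. nra. }
    exists (2 * PI - acos x). split; [lra|]. split.
    + rewrite cos_minus, cos_2PI, sin_2PI, cos_acos; auto; ring.
    + rewrite sin_minus, cos_2PI, sin_2PI, sin_acos, Hs, Rabs_left; auto; ring.
Qed.

Lemma refl_eq (a th : R) :
  refl a (cos (a + th), sin (a + th)) = (cos (a - th), sin (a - th)).
Proof.
  unfold refl; simpl. pose proof (sin2_cos2 a) as S. unfold Rsqr in S.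
  f_equal.
  - assert (E : 2 * (cos (a + th) * cos a + sin (a + th) * sin a) * cos a - cos (a + th)
              - cos (a - th) = 2 * cos th * cos a * (sin a * sin a + cos a * cos a - 1)).
    { rewrite cos_plus, sin_plus, cos_minus. ring. }
    rewrite S in E. lra.
  - assert (E : 2 * (cos (a + th) * cos a + sin (a + th) * sin a) * sin a - sin (a + th)
              - sin (a - th) = 2 * cos th * sin a * (sin a * sin a + cos a * cos a - 1)).
    { rewrite cos_plus, sin_plus, sin_minus. ring. }
    rewrite S in E. lra.
Qed.

Theorem corollary2p2 (v : pt -> R) :
  cont_on_S1 v ->
  (forall p, on_S1 p -> 0 < v p) ->
  separable_S1 v ->
  (forall alpha, 0 <= alpha < 2 * PI ->
     v (cos alpha, sin alpha) = v (cos (alpha + PI), sin (alpha + PI))) ->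
  forall p q, on_S1 p -> on_S1 q -> v p = v q.
Proof.
  intros _ _ Hsep Hpi.
  set (F := fun t => v (cos t, sin t)).
  assert (P : forall t, F (t + PI) = F t).
  { intro t. destruct (param (cos t) (sin t)) as [t0 [Ht0 [E1 E2]]].
    { pose proof (sin2_cos2 t). unfold Rsqr in *. nra. }
    unfold F.
    assert (C1 : cos (t + PI) = cos (t0 + PI)) by (rewrite !cos_plus, E1, E2; reflexivity).
    assert (C2 : sin (t + PI) = sin (t0 + PI)) by (rewrite !sin_plus, E1, E2; reflexivity).
    rewrite C1, C2, E1, E2, <- Hpi by auto. reflexivity. }
  assert (K : forall a th, 0 <= a < 2 * PI -> 0 < th < PI -> F (a + th) = F (a - th)).
  { intros a th Ha Hth.
    assert (P1 : F (a - th) = F (a + (PI - th))).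
    { replace (a + (PI - th)) with ((a - th) + PI) by ring. rewrite P; auto. }
    assert (P2 : F (a + th) = F (a - (PI - th))).
    { replace (a + th) with ((a - (PI - th)) + PI) by ring. rewrite P; auto. }
    assert (Hh : forall s, 0 < s < PI -> S1_half a (cos (a + s), sin (a + s)))
      by (intros s Hs; exists s; auto).
    assert (Hth' : 0 < PI - th < PI) by lra.
    destruct (Hsep a Ha) as [G|G].
    - pose proof (G _ (Hh _ Hth)) as G1. pose proof (G _ (Hh _ Hth')) as G2.
      rewrite refl_eq in G1, G2. fold (F (a - th)) (F (a + th)) in G1.
      fold (F (a - (PI - th))) (F (a + (PI - th))) in G2. lra.
    - pose proof (G _ (Hh _ Hth)) as G1. pose proof (G _ (Hh _ Hth')) as G2.
      rewrite refl_eq in G1, G2. fold (F (a - th)) (F (a + th)) in G1.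
      fold (F (a - (PI - th))) (F (a + (PI - th))) in G2. lra. }
  assert (W : forall a b, 0 <= a < 2 * PI -> 0 <= b < 2 * PI -> a < b -> F a = F b).
  { intros a b Ha Hb Hab.
    pose proof (K ((a + b) / 2) ((b - a) / 2)) as K'.
    replace ((a + b) / 2 + (b - a) / 2) with b in K' by field.
    replace ((a + b) / 2 - (b - a) / 2) with a in K' by field.
    symmetry. apply K'; lra. }
  intros [x1 y1] [x2 y2] Hp Hq. unfold on_S1 in Hp, Hq; simpl in Hp, Hq.
  destruct (param _ _ Hp) as [a [Ha [-> ->]]].
  destruct (param _ _ Hq) as [b [Hb [-> ->]]].
  change (F a = F b).
  destruct (Rtotal_order a b) as [h|[h|h]].
  - apply W; auto.
  - subst; reflexivity.
  - symmetry; apply W; auto.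
Qed.
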